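(* Fix range parameters $0<L_I\le U_I$ and $0\le L_V\le U_V$, and let $\alpha=(a_1,\dots,a_w)$. Let $a_i\in\mathbb{L}^{t+1}_\alpha$. Suppose $a_k$ is the leftmost non-black item of $\mathbb{L}^t_\alpha$ satisfying $L_V\le a_i-a_k$ and $i-k\le U_I$; that is, $a_k$ is the leftmost partially-proper item of $a_i$. Then $a_i$ has a range-proper predecessor if and only if $a_k$ is a range-proper predecessor of $a_i$.
   Context: Let $\alpha=(a_1,\dots,a_w)$ be a finite sequence of real numbers, with items identified by their positions. Increasing subsequences are non-strict. $a_j$ is compatible with $a_i$ if $j<i$ and $a_j\le a_i$. $RL_\alpha(a)$ is the maximum length of an increasing subsequence ending at $a$. $a_j$ is a predecessor of $a_i$ if it is compatible with $a_i$ and $RL_\alpha(a_j)=RL_\alpha(a_i)-1$. The horizontal list $\mathbb{L}^t_\alpha$ is the list of items of rising length $t$, ordered by position; ''left of'' means earlier position. Items are colored black or non-black recursively by level: all items of $\mathbb{L}^1_\alpha$ are non-black, and an item of $\mathbb{L}^{t+1}_\alpha$ is non-black iff it has a range-proper predecessor. Here a range-proper predecessor of $a_i$ is a non-black predecessor $a_k$ with $L_V\le a_i-a_k\le U_V$ and $L_I\le i-k\le U_I$. *)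

(* Defs.v *)
(* Sequence alpha = s : seq R over a real domain R,
   items identified by 0-based positions i < size s (index differences
   are shift-invariant, so this matches the paper's 1-based positions). *)
From HB Require Import structures.
From mathcomp Require Import all_boot all_order all_algebra.
Set Implicit Arguments. Unset Strict Implicit. Unset Printing Implicit Defensive.
Import Order.TTheory GRing.Theory Num.Theory.
Local Open Scope ring_scope.

Section Defs.
Variable R : realDomainType.
Variable s : seq R.

Definition item (i : nat) : R := nth 0 s i.

Definition incr_ending (S : {set 'I_(size s)}) (i : nat) : bool :=
  [&& [exists x in S, val x == i],
      [forall x in S, (val x <= i)%N] &
      [forall x in S, forall y in S, (val x < val y)%N ==> (item x <= item y)]].

Definition RL (i : nat) : nat :=
  \max_(S : {set 'I_(size s)} | incr_ending S i) #|S|.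

Definition compatible (j i : nat) : bool := (j < i)%N && (item j <= item i).

Definition predecessor (j i : nat) : bool :=
  compatible j i && (RL j == (RL i).-1)%N.

Variables (LI UI : nat) (LV UV : R).

Definition in_range (k i : nat) : bool :=
  [&& LV <= item i - item k, item i - item k <= UV,
      (LI <= i - k)%N & (i - k <= UI)%N].

(* recursive colouring; fuel bounds the recursion (predecessors lie strictly left) *)
Fixpoint nonblack_fuel (fuel : nat) (i : nat) : bool :=
  match fuel with
  | 0 => false
  | f.+1 => (RL i == 1)%N ||
      [exists k : 'I_(size s),
         [&& predecessor k i, nonblack_fuel f k & in_range k i]]
  end.

Definition nonblack (i : nat) : bool := nonblack_fuel i.+1 i.

Definition range_proper (k i : nat) : bool :=
  [&& (k < size s)%N, predecessor k i, nonblack k & in_range k i].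

End Defs.

(* Main.v *)
Require Import Defs.
From HB Require Import structures.
From mathcomp Require Import all_boot all_order all_algebra.
Import Order.TTheory GRing.Theory Num.Theory.
Local Open Scope ring_scope.

Lemma RL_step (R : realDomainType) (s : seq R) (j l : nat) :
  (j < l)%N -> (l < size s)%N -> item s j <= item s l ->
  (RL s j < RL s l)%N.
Proof.
move=> jl ls hv.
have js : (j < size s)%N by apply: ltn_trans jl ls.
set J := Ordinal js; set L := Ordinal ls.
have hJ : incr_ending [set J] j.
  apply/and3P; split.
  - by apply/existsP; exists J; rewrite set11 /= eqxx.
  - by apply/forallP => x; apply/implyP; rewrite in_set1 => /eqP ->.
  - apply/forallP => x; apply/implyP; rewrite in_set1 => /eqP ->.
    by apply/forallP => y; apply/implyP; rewrite in_set1 => /eqP ->; rewrite ltnn.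
have [S hS ->] : {S : {set 'I_(size s)} | incr_ending S j & RL s j = #|S|}.
  rewrite /RL; apply: eq_bigmax_cond.
  by apply/card_gt0P; exists [set J].
case/and3P: hS => /existsP [w /andP [wS /eqP wj]] /forallP hle /forallP hinc.
have LnS : L \notin S.
  apply/negP => LS; move: (hle L); rewrite LS /= => hh.
  by move: (leq_trans jl hh); rewrite ltnn.
have hL : incr_ending (L |: S) l.
  apply/and3P; split.
  - by apply/existsP; exists L; rewrite setU11 /= eqxx.
  - apply/forallP => x; apply/implyP; rewrite in_setU1 => /orP [/eqP -> //|xS].
    by move: (hle x); rewrite xS /= => h; apply: ltnW (leq_ltn_trans h jl).
  - apply/forallP => x; apply/implyP; rewrite in_setU1 => /orP [/eqP ->|xS].
      apply/forallP => y; apply/implyP; rewrite in_setU1 => /orP [/eqP ->|yS].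
        by rewrite ltnn.
      move: (hle y); rewrite yS /= => h.
      apply/implyP => hly; move: (leq_ltn_trans h (ltn_trans jl hly)).
      by rewrite ltnn.
    apply/forallP => y; apply/implyP; rewrite in_setU1 => /orP [/eqP ->|yS].
      apply/implyP => _.
      have hxj : (item s x <= item s j).
        move: (hle x); rewrite xS /= leq_eqVlt => /orP [/eqP -> //|hxj].
        move: (hinc x); rewrite xS /= => /forallP /(_ w); rewrite wS wj hxj /=.
        by [].
      exact: le_trans hxj hv.
    by move: (hinc x); rewrite xS /= => /forallP /(_ y); rewrite yS.
have := @leq_bigmax_cond _ (fun S : {set 'I_(size s)} => incr_ending S l) (fun S => #|S|) _ hL.
by rewrite /RL cardsU1 LnS add1n.
Qed.

Theorem mainTheorem13 (R : realDomainType) (LI UI : nat) (LV UV : R)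
  (hLI : (0 < LI)%N) (hI : (LI <= UI)%N) (hLV : 0 <= LV) (hV : LV <= UV)
  (s : seq R) (t i k : nat)
  (hi : (i < size s)%N) (hRLi : RL s i = t.+1)
  (hk : (k < size s)%N) (hRLk : RL s k = t)
  (hknb : nonblack s LI UI LV UV k)
  (hkV : LV <= item s i - item s k) (hkI : (i - k <= UI)%N)
  (hleft : forall k' : nat, (k' < size s)%N -> RL s k' = t ->
     nonblack s LI UI LV UV k' -> LV <= item s i - item s k' ->
     (i - k' <= UI)%N -> (k <= k')%N) :
  (exists k' : nat, range_proper s LI UI LV UV k' i) <->
  range_proper s LI UI LV UV k i.
Proof.
split; last by move=> h; exists k.
case=> k' /and4P [k's /andP [/andP [k'i hv'] /eqP hRL'] nb' /and4P [r1 r2 r3 r4]].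
rewrite hRLi /= in hRL'.
have kk' := hleft k' k's hRL' nb' r1 r4.
have ki : (k < i)%N := leq_ltn_trans kk' k'i.
have hvk' : item s k' <= item s k.
  move: kk'; rewrite leq_eqVlt => /orP [/eqP <- //|lt].
  rewrite leNgt; apply/negP => hlt.
  by move: (@RL_step _ s _ _ lt k's (ltW hlt)); rewrite hRLk hRL' ltnn.
apply/and4P; split => //.
  rewrite /predecessor hRLi hRLk /= eqxx andbT /compatible ki /=.
  by rewrite -subr_ge0; apply: le_trans hLV hkV.
apply/and4P; split => //.
- apply: le_trans r2; by rewrite lerD2l lerN2.
- apply: leq_trans r3 _; apply: leq_sub2l kk'.
Qed.
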